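(* Let $T$ be a ranked monad on $\mathbf{Set}$, let $B$ be the Boolean algebra of complemented opens of $\mathrm{LB}_0T$ and $\mathcal{J}$ the set of partitions of $\mathrm{LB}_0T$, and let $\approx$ be the congruence on the free $B_{\mathcal{J}}$-set $T1[B]^{\mathcal{J}}$ defining the sheaf of transitions $F_T$. Then for $x,y\in T1[B]^{\mathcal{J}}$: $x\approx y$ iff for all $m,n\in T1$ we have $m\sim_{x(m)\wedge y(n)}n$. Moreover, for $m,n\in T1$ and $b\in B$: $m\equiv_b n$ in $F_T$ iff $m\sim_b n$.
   Context: Monads: sets $TA$, $\mathrm{return}$, $\mathbin{\gg\!=}\colon TA\times(TB)^A\to TB$ with monad laws; $t\gg s:=t\mathbin{\gg\!=}\lambda a.s$; ranked of rank $\kappa$ (regular): every $t\in TA$ is $t'\mathbin{\gg\!=}\lambda i.\mathrm{return}\,f(i)$ with $t'\in TI$, $|I|<\kappa$. $1=\{*\}$, $2=\{0,1\}$. $\mathrm{LB}_0T$: frame presented by generators $[b]$ ($b\in T2$) with relations $[t\mapsto a]\wedge[t\mapsto a']=\bot$ ($a\ne a'$), $[t\gg\mathrm{return}\,a\mapsto a]=\top$, $[t\mathbin{\gg\!=}u\mapsto b]=\bigvee_a[t\mapsto a]\wedge[t\gg u(a)\mapsto b]$, where $[t\mapsto a]:=[t\mathbin{\gg\!=}\lambda a'.\mathrm{return}(\delta_a(a'))]$, $\delta_a(a')=1$ iff $a'=a$. It is ultraparacompact, and each $P^{(t)}:=\{[t\mapsto a]:a\in A\}\setminus\{\bot\}$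 lies in $\mathcal{J}$ (partition = pairwise disjoint cover without $\bot$). Trace equivalence: $[\![m\sim_1m']\!]=\bigvee\{[t\mapsto a]:|A|\le\kappa,t\in TA,u,u'\colon A\to T1,a\in A,u(a)=u'(a),m=t\mathbin{\gg\!=}u,m'=t\mathbin{\gg\!=}u'\}$; for $k\ge2$, $[\![m_1\sim_km_k]\!]=\bigvee\{\bigwedge_{i=1}^{k-1}[\![m_i\sim_1m_{i+1}]\!]:m_2,\dots,m_{k-1}\in T1\}$; $[\![m\sim m']\!]=\bigvee_{k\ge1}[\![m\sim_km']\!]$; $m\sim_bm'$ iff $b\le[\![m\sim m']\!]$. $B_{\mathcal{J}}$-sets: a set with binary operations $b(-,-)$ ($b\in B$) and $P$-ary operations $P(-)$ ($P\in\mathcal{J}$) satisfying $b(x,x)=x$, $b(b(x,y),z)=b(x,z)$, $b(x,b(y,z))=b(x,z)$, $\top(x,y)=x$, $(\neg b)(x,y)=b(y,x)$, $(b\wedge c)(x,y)=b(c(x,y),y)$, $P(\lambda b.z)=z$, $P(\lambda b.b(x_b,y_b))=P(\lambda b.x_b)$, $b(P(x),x_b)=x_b$; $x\equiv_by$ iff $b(x,y)=y$. The free $B_{\mathcal{J}}$-set $T1[B]^{\mathcal{J}}$ is the set of functions $h\colon T1\to B$ with $\{h(m):m\in T1\}\setminus\{\bot\}\in\mathcal{J}$, with $P(\lambda c.h_c)=\lambda m.\bigvee_{c\in P}c\wedge h_c(m)$ (and $b(h,h')=\lambda m.(b\wedge h(m))\vee(\neg b\wedge h'(m))$); $m\in T1$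 is identified with $\delta_m$ ($\delta_m(m)=\top$, $\delta_m(m')=\bot$ otherwise). A congruence is an equivalence relation $\approx$ such that $x_c\approx y_c$ for all $c\in P$ implies $P(x)\approx P(y)$, for all $P\in\mathcal{J}$. $\approx$ is the smallest congruence with $\delta_{t\mathbin{\gg\!=}u}\approx P^{(t)}(\lambda[t\mapsto a].\,\delta_{t\gg u(a)})$ for all sets $A$, $t\in TA$, $u\colon A\to T1$; $F_T:=T1[B]^{\mathcal{J}}/{\approx}$ with induced operations, and $m\equiv_bn$ in $F_T$ means $b(\delta_m,\delta_n)\approx\delta_n$. *)

(* Defs.v *)
From Stdlib Require Import ClassicalEpsilon.

Set Implicit Arguments.
Unset Strict Implicit.

(* Cardinals, represented by types.                                   *)

Definition card_le (A B : Type) : Prop :=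
  exists f : A -> B, forall x y, f x = f y -> x = y.

Definition card_lt (A B : Type) : Prop := card_le A B /\ ~ card_le B A.

Definition regular_card (K : Type) : Prop :=
  card_le nat K /\
  forall (I : Type) (X : I -> Type),
    card_lt I K -> (forall i, card_lt (X i) K) -> card_lt {i : I & X i} K.

Record Monad := {
  MT : Type -> Type;
  mret : forall A : Type, A -> MT A;
  mbind : forall A B : Type, MT A -> (A -> MT B) -> MT B;
  mbind_ret_l : forall (A B : Type) (a : A) (f : A -> MT B),
      mbind (mret a) f = f a;
  mbind_ret_r : forall (A : Type) (t : MT A), mbind t (@mret A) = t;
  mbind_assoc : forall (A B C : Type) (t : MT A) (f : A -> MT B) (g : B -> MT C),
      mbind (mbind t f) g = mbind t (fun a => mbind (f a) g)
}.

Arguments mret {m A} a.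
Arguments mbind {m A B} t f.

Definition mthen (M : Monad) (A B : Type) (t : MT M A) (s : MT M B) : MT M B :=
  mbind t (fun _ => s).

Definition ranked_of_rank (M : Monad) (K : Type) : Prop :=
  regular_card K /\
  forall (A : Type) (t : MT M A),
    exists (I : Type) (t' : MT M I) (f : I -> A),
      card_lt I K /\ t = mbind t' (fun i => mret (f i)).

Definition delta_bool (A : Type) (a a' : A) : bool :=
  if excluded_middle_informative (a' = a) then true else false.

Definition mapsto (M : Monad) (A : Type) (t : MT M A) (a : A) : MT M bool :=
  mbind t (fun a' => mret (delta_bool a a')).

Record Frame := {
  fc :> Type;
  fle : fc -> fc -> Prop;
  fmeet : fc -> fc -> fc;
  fjoin : (fc -> Prop) -> fc;
  ftop : fc;
  fbot : fc;
  fle_refl : forall a, fle a a;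
  fle_trans : forall a b c, fle a b -> fle b c -> fle a c;
  fle_antisym : forall a b, fle a b -> fle b a -> a = b;
  fmeet_glb : forall a b c, fle c (fmeet a b) <-> (fle c a /\ fle c b);
  fjoin_ub : forall (S : fc -> Prop) a, S a -> fle a (fjoin S);
  fjoin_lub : forall (S : fc -> Prop) c, (forall a, S a -> fle a c) -> fle (fjoin S) c;
  ftop_max : forall a, fle a ftop;
  fbot_min : forall a, fle fbot a;
  fdistr : forall a (S : fc -> Prop),
      fmeet a (fjoin S) = fjoin (fun v => exists s, S s /\ v = fmeet a s)
}.

Arguments fle {f} a b.
Arguments fmeet {f} a b.
Arguments fjoin {f} S.
Arguments ftop {f}.
Arguments fbot {f}.

Definition fjoin2 (L : Frame) (a b : L) : L := fjoin (fun v => v = a \/ v = b).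

(* pseudocomplement; equals the complement on complemented elements *)
Definition fneg (L : Frame) (a : L) : L := fjoin (fun c => fmeet a c = fbot).

Definition frame_hom (L M : Frame) (h : L -> M) : Prop :=
  (forall a b, h (fmeet a b) = fmeet (h a) (h b)) /\
  h ftop = ftop /\
  (forall S : L -> Prop, h (fjoin S) = fjoin (fun v => exists s, S s /\ v = h s)).

(* The frame LB_0 T, presented by generators [b] (b in T2) and         *)
(* relations; characterized by its universal property.                 *)

Definition LB0_relations (M : Monad) (F : Frame) (g : MT M bool -> F) : Prop :=
  (forall (A : Type) (t : MT M A) (a a' : A),
      a <> a' -> fmeet (g (mapsto t a)) (g (mapsto t a')) = fbot) /\
  (forall (A : Type) (t : MT M A) (a : A),
      g (mapsto (mthen t (mret a)) a) = ftop) /\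
  (forall (A B : Type) (t : MT M A) (u : A -> MT M B) (b : B),
      g (mapsto (mbind t u) b) =
      fjoin (fun v => exists a : A,
                 v = fmeet (g (mapsto t a)) (g (mapsto (mthen t (u a)) b)))).

Definition is_LB0 (M : Monad) (L : Frame) (gen : MT M bool -> L) : Prop :=
  LB0_relations gen /\
  forall (F : Frame) (g : MT M bool -> F),
    LB0_relations g ->
    exists h : L -> F,
      (frame_hom h /\ forall b, h (gen b) = g b) /\
      (forall h' : L -> F, frame_hom h' -> (forall b, h' (gen b) = g b) ->
                           forall x, h' x = h x).

Definition complemented (L : Frame) (b : L) : Prop :=
  exists c : L, fmeet b c = fbot /\ fjoin2 b c = ftop.

Definition partition (L : Frame) (P : L -> Prop) : Prop :=
  (forall c, P c -> c <> fbot) /\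
  (forall c d, P c -> P d -> c <> d -> fmeet c d = fbot) /\
  fjoin P = ftop.

Section Trace.
Variables (M : Monad) (K : Type) (L : Frame) (gen : MT M bool -> L).

Definition T1 := MT M unit.

Definition trace1 (m m' : T1) : L :=
  fjoin (fun v => exists (A : Type) (t : MT M A) (u u' : A -> T1) (a : A),
             card_le A K /\ u a = u' a /\ m = mbind t u /\ m' = mbind t u' /\
             v = gen (mapsto t a)).

Fixpoint bigmeet (f : nat -> L) (k : nat) : L :=
  match k with
  | 0 => ftop
  | S k' => fmeet (bigmeet f k') (f k')
  end.

(* [[ m_1 ~_k m_k ]] for k >= 1 (the value at k = 0 is unused) *)
Definition tracek (k : nat) (m n : T1) : L :=
  match k with
  | 0 => fbot
  | 1 => trace1 m n
  | _ => fjoin (fun v => exists s : nat -> T1,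
                    s 1 = m /\ s k = n /\
                    v = bigmeet (fun i => trace1 (s (i + 1)) (s (i + 2))) (k - 1))
  end.

Definition trace (m n : T1) : L :=
  fjoin (fun v => exists k, 1 <= k /\ v = tracek k m n).

Definition trace_eq_b (b : L) (m m' : T1) : Prop := fle b (trace m m').

(* h : T1 -> B whose family of non-bottom values is a partition *)
Definition free_elem (h : T1 -> L) : Prop :=
  (forall m, complemented (h m)) /\
  (forall m m', m <> m' -> fmeet (h m) (h m') = fbot) /\
  fjoin (fun v => exists m, v = h m) = ftop.

Definition dirac (m : T1) : T1 -> L :=
  fun m' => if excluded_middle_informative (m = m') then ftop else fbot.

Definition Pop (P : L -> Prop) (x : L -> T1 -> L) : T1 -> L :=
  fun m => fjoin (fun v => exists c, P c /\ v = fmeet c (x c m)).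

Definition bop (b : L) (h h' : T1 -> L) : T1 -> L :=
  fun m => fjoin2 (fmeet b (h m)) (fmeet (fneg b) (h' m)).

Definition Pt (A : Type) (t : MT M A) : L -> Prop :=
  fun c => (exists a, c = gen (mapsto t a)) /\ c <> fbot.

Definition gen_family (A : Type) (t : MT M A) (u : A -> T1) : L -> T1 -> L :=
  fun c m => fjoin (fun v => exists a, c = gen (mapsto t a) /\
                                v = dirac (mthen t (u a)) m).

Definition is_congruence (R : (T1 -> L) -> (T1 -> L) -> Prop) : Prop :=
  (forall x y, R x y -> free_elem x /\ free_elem y) /\
  (forall x, free_elem x -> R x x) /\
  (forall x y, R x y -> R y x) /\
  (forall x y z, R x y -> R y z -> R x z) /\
  (forall (P : L -> Prop) (x y : L -> T1 -> L),
      partition P ->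
      (forall c, P c -> R (x c) (y c)) ->
      R (Pop P x) (Pop P y)).

Definition contains_generators (R : (T1 -> L) -> (T1 -> L) -> Prop) : Prop :=
  forall (A : Type) (t : MT M A) (u : A -> T1),
    R (dirac (mbind t u)) (Pop (Pt t) (gen_family t u)).

Definition approx (x y : T1 -> L) : Prop :=
  forall R, is_congruence R -> contains_generators R -> R x y.

End Trace.

(* Main.v *)
Require Import Defs.
From Stdlib Require Import ClassicalEpsilon FunctionalExtensionality PropExtensionality ProofIrrelevance Lia Classical Arith.

Section FrameLemmas.
Context {L : Frame}.
Implicit Types a b c d x y z : L.

Lemma meet_l a b : fle (fmeet a b) a.
Proof. apply (proj1 (fmeet_glb a b (fmeet a b)) (fle_refl _)). Qed.
Lemma meet_r a b : fle (fmeet a b) b.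
Proof. apply (proj1 (fmeet_glb a b (fmeet a b)) (fle_refl _)). Qed.
Lemma meet_i a b c : fle c a -> fle c b -> fle c (fmeet a b).
Proof. intros; apply fmeet_glb; auto. Qed.
Lemma le_tr a b c : fle a b -> fle b c -> fle a c.
Proof. apply fle_trans. Qed.
Lemma meet_mono a b c d : fle a c -> fle b d -> fle (fmeet a b) (fmeet c d).
Proof. intros; apply meet_i. eapply le_tr; [apply meet_l|auto]. eapply le_tr; [apply meet_r|auto]. Qed.
Lemma meet_comm a b : fmeet a b = fmeet b a.
Proof. apply fle_antisym; apply meet_i; auto using meet_l, meet_r. Qed.
Lemma meet_assoc a b c : fmeet a (fmeet b c) = fmeet (fmeet a b) c.
Proof. apply fle_antisym; repeat apply meet_i;
  eauto using meet_l, meet_r, le_tr. Qed.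
Lemma meet_eq a b : fle a b -> fmeet a b = a.
Proof. intros; apply fle_antisym; auto using meet_l. apply meet_i; auto using fle_refl. Qed.
Lemma meet_eq' a b : fle a b -> fmeet b a = a.
Proof. intros; rewrite meet_comm; apply meet_eq; auto. Qed.
Lemma le_of_meet a b : fmeet a b = a -> fle a b.
Proof. intros H; rewrite <- H; apply meet_r. Qed.
Lemma bot_eq a : fle a fbot -> a = fbot.
Proof. intros; apply fle_antisym; auto using fbot_min. Qed.
Lemma top_eq a : fle ftop a -> a = ftop.
Proof. intros; apply fle_antisym; auto using ftop_max. Qed.
Lemma meet_top a : fmeet a ftop = a.
Proof. apply meet_eq, ftop_max. Qed.
Lemma meet_bot a : fmeet a fbot = fbot.
Proof. apply bot_eq, meet_r. Qed.
Lemma meet_idem a : fmeet a a = a.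
Proof. apply meet_eq, fle_refl. Qed.

Lemma ub a (S : L -> Prop) : S a -> fle a (fjoin S).
Proof. apply fjoin_ub. Qed.
Lemma ub_le a b (S : L -> Prop) : S b -> fle a b -> fle a (fjoin S).
Proof. intros; eapply le_tr; eauto using ub. Qed.
Lemma lub (S : L -> Prop) c : (forall a, S a -> fle a c) -> fle (fjoin S) c.
Proof. apply fjoin_lub. Qed.

Lemma meet_join_le a (S : L -> Prop) z :
  (forall s, S s -> fle (fmeet a s) z) -> fle (fmeet a (fjoin S)) z.
Proof. intros H; rewrite fdistr; apply lub; intros v [s [Hs ->]]; auto. Qed.
Lemma join_meet_le a (S : L -> Prop) z :
  (forall s, S s -> fle (fmeet s a) z) -> fle (fmeet (fjoin S) a) z.
Proof. intros H; rewrite meet_comm; apply meet_join_le; intros; rewrite meet_comm; auto. Qed.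

Lemma fjoin_empty : fjoin (fun _ : L => False) = fbot.
Proof. apply bot_eq, lub; intros _ []. Qed.

Lemma j2_l a b : fle a (fjoin2 a b).
Proof. apply ub; auto. Qed.
Lemma j2_r a b : fle b (fjoin2 a b).
Proof. apply ub; auto. Qed.
Lemma j2_lub a b c : fle a c -> fle b c -> fle (fjoin2 a b) c.
Proof. intros; apply lub; intros v [->| ->]; auto. Qed.
Lemma meet_j2_le a b c z : fle (fmeet a b) z -> fle (fmeet a c) z -> fle (fmeet a (fjoin2 b c)) z.
Proof. intros; apply meet_join_le; intros s [->| ->]; auto. Qed.

Lemma neg_meet a : fmeet a (fneg a) = fbot.
Proof. apply bot_eq, meet_join_le; intros s Hs; rewrite Hs; apply fle_refl. Qed.
Lemma neg_meet' a : fmeet (fneg a) a = fbot.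
Proof. rewrite meet_comm; apply neg_meet. Qed.
Lemma neg_le a b : fmeet a b = fbot -> fle b (fneg a).
Proof. intros; apply ub; auto. Qed.
Lemma neg_anti a b : fle a b -> fle (fneg b) (fneg a).
Proof. intros; apply neg_le, bot_eq. eapply le_tr. apply meet_mono. eauto. apply fle_refl.
  rewrite neg_meet; apply fle_refl. Qed.

Definition comp a := fjoin2 a (fneg a) = ftop.
Lemma comp_iff a : complemented a <-> comp a.
Proof. split.
  - intros [c [H1 H2]]. apply top_eq. rewrite <- H2. apply j2_lub. apply j2_l.
    eapply le_tr; [|apply j2_r]. apply neg_le; auto.
  - intros H; exists (fneg a); split; auto using neg_meet. Qed.

Lemma split_le c a z : comp c -> fle (fmeet a c) z -> fle (fmeet a (fneg c)) z -> fle a z.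
Proof. intros Hc H1 H2. rewrite <- (meet_top a). rewrite <- Hc. apply meet_j2_le; auto. Qed.

Lemma ext_split c a b : comp c -> fmeet c a = fmeet c b -> fmeet (fneg c) a = fmeet (fneg c) b -> a = b.
Proof. intros Hc H1 H2; apply fle_antisym; apply (split_le c); auto;
  rewrite meet_comm; [rewrite H1|rewrite H2|rewrite <- H1|rewrite <- H2]; apply meet_r. Qed.

Lemma comp_top : comp ftop.
Proof. apply top_eq, j2_l. Qed.
Lemma comp_bot : comp fbot.
Proof. apply top_eq. eapply le_tr; [|apply j2_r]. apply neg_le. apply meet_top. Qed.
Lemma neg_neg_le a : fle a (fneg (fneg a)).
Proof. apply neg_le. apply neg_meet'. Qed.
Lemma comp_neg a : comp a -> comp (fneg a).
Proof. intros H; apply top_eq. rewrite <- H. apply j2_lub. apply ub_le with (fneg (fneg a)); auto using neg_neg_le.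
 apply j2_l. Qed.
Lemma comp_meet a b : comp a -> comp b -> comp (fmeet a b).
Proof. intros Ha Hb. apply top_eq. apply (split_le a); [auto| |].
  - apply (split_le b); auto.
    + eapply le_tr;[|apply j2_l]. apply meet_mono. apply meet_r. apply fle_refl.
    + eapply le_tr;[|apply j2_r]. apply neg_le. apply bot_eq.
      eapply le_tr. apply meet_mono. apply meet_r. apply meet_r. rewrite neg_meet; apply fle_refl.
  - eapply le_tr;[|apply j2_r]. apply neg_le. apply bot_eq.
      eapply le_tr. apply meet_mono. apply meet_l. apply meet_r. rewrite neg_meet; apply fle_refl.
Qed.

Lemma comp_of_neg c d : fmeet c d = fbot -> fjoin2 c d = ftop -> fneg c = d.
Proof. intros H1 H2. apply fle_antisym; [|apply neg_le; auto].
  rewrite <- (meet_top (fneg c)), <- H2. apply meet_j2_le.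
  rewrite neg_meet'; apply fbot_min. apply meet_r. Qed.

Definition imp a b := fjoin (fun c => fle (fmeet c a) b).
Lemma imp_intro a b c : fle (fmeet c a) b -> fle c (imp a b).
Proof. intros; apply ub; auto. Qed.
Lemma imp_elim a b : fle (fmeet (imp a b) a) b.
Proof. apply join_meet_le; auto. Qed.
Lemma imp_trans a b c : fle (fmeet (imp a b) (imp b c)) (imp a c).
Proof. apply imp_intro. eapply le_tr; [|apply (imp_elim b c)].
  apply meet_i. eapply le_tr; [apply meet_l|apply meet_r].
  eapply le_tr; [|apply (imp_elim a b)]. apply meet_mono; [apply meet_l|apply fle_refl]. Qed.

End FrameLemmas.


Section Free.
Context {M : Monad}.
Context {L : Frame}.
Implicit Types a b c d : L.
Implicit Types x y z : T1 M -> L.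
Implicit Types m n k : T1 M.
Implicit Types X Y : L -> T1 M -> L.

Lemma le_bot_l a b : a = fbot -> fle (fmeet a b) fbot.
Proof. intros ->; apply meet_l. Qed.

Lemma comp_of_disj (I : Type) (h : I -> L) i :
  (forall j, j <> i -> fmeet (h i) (h j) = fbot) ->
  fjoin (fun v => exists j, v = h j) = ftop -> comp (h i).
Proof. intros Hd Hc. apply top_eq. rewrite <- Hc. apply lub. intros v [j ->].
  destruct (classic (j = i)) as [->|Hn]. apply j2_l.
  eapply le_tr; [|apply j2_r]. apply neg_le; auto. Qed.

Lemma free_of x : (forall m m', m <> m' -> fmeet (x m) (x m') = fbot) ->
  fjoin (fun v => exists m, v = x m) = ftop -> free_elem x.
Proof. intros H1 H2; split; [|split]; auto. intros m; apply comp_iff.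
  apply comp_of_disj; auto. Qed.

Lemma free_comp x m : free_elem x -> comp (x m).
Proof. intros [H _]; apply comp_iff; auto. Qed.

Lemma part_comp (P : L -> Prop) c : partition P -> P c -> comp c.
Proof. intros [H1 [H2 H3]] Hc. apply top_eq. rewrite <- H3. apply lub. intros d Hd.
  destruct (classic (d = c)) as [->|Hn]. apply j2_l.
  eapply le_tr; [|apply j2_r]. apply neg_le; auto. Qed.

Lemma dirac_free m : free_elem (dirac L m).
Proof. apply free_of.
  - intros a b Hab. unfold dirac. destruct (excluded_middle_informative (m = a)),
      (excluded_middle_informative (m = b)); subst; try congruence;
      auto using meet_bot. rewrite meet_comm; apply meet_bot.
  - apply top_eq. apply ub_le with (dirac L m m). eauto. unfold dirac.
    destruct (excluded_middle_informative (m = m)); [apply fle_refl| congruence]. Qed.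

Lemma dirac_eq m : dirac L m m = ftop.
Proof. unfold dirac; destruct (excluded_middle_informative (m = m)); congruence. Qed.
Lemma dirac_neq m n : m <> n -> dirac L m n = fbot.
Proof. unfold dirac; destruct (excluded_middle_informative (m = n)); congruence. Qed.

Lemma pop_le (P : L -> Prop) X k (z : L) :
  (forall c, P c -> fle (fmeet c (X c k)) z) -> fle (Pop P X k) z.
Proof. intros H; apply lub; intros v [c [Hc ->]]; auto. Qed.
Lemma pop_ge (P : L -> Prop) X k c : P c -> fle (fmeet c (X c k)) (Pop P X k).
Proof. intros; apply ub; eauto. Qed.

Lemma pop_at (P : L -> Prop) X k c d : partition P -> P c -> fle d c ->
  fmeet d (Pop P X k) = fmeet d (X c k).
Proof. intros HP Hc Hd. apply fle_antisym.
  - apply meet_join_le. intros v [c' [Hc' ->]].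
    destruct (classic (c' = c)) as [->|Hn].
    + apply meet_mono. apply fle_refl. apply meet_r.
    + eapply le_tr; [|apply fbot_min]. destruct HP as [_ [H2 _]].
      rewrite <- (H2 c c'); auto. apply meet_mono; auto. apply meet_l.
  - apply meet_i. apply meet_l. eapply le_tr; [|apply (pop_ge P X k c Hc)].
    apply meet_mono; auto. apply fle_refl. Qed.

Lemma pop_free (P : L -> Prop) X : partition P -> (forall c, P c -> free_elem (X c)) ->
  free_elem (Pop P X).
Proof. intros HP HX. apply free_of.
  - intros m m' Hmm. apply bot_eq. unfold Pop. apply join_meet_le. intros v [c [Hc ->]].
    apply meet_join_le. intros v [d [Hd ->]].
    destruct (classic (c = d)) as [<-|Hn].
    + destruct (HX c Hc) as [_ [H _]]. rewrite <- (H m m' Hmm).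
      apply meet_mono. apply meet_r. apply meet_r.
    + destruct HP as [_ [H2 _]]. rewrite <- (H2 c d); auto.
      apply meet_mono. apply meet_l. apply meet_l.
  - apply top_eq. destruct HP as [H1 [H2 H3]]. rewrite <- H3 at 1. apply lub. intros c Hc.
    destruct (HX c Hc) as [_ [_ Hx]]. rewrite <- (meet_top c), <- Hx.
    apply meet_join_le. intros s [m ->]. apply ub_le with (Pop P X m). eauto.
    apply pop_ge; auto. Qed.

Lemma pop_const (P : L -> Prop) y : partition P -> Pop P (fun _ => y) = y.
Proof. intros HP. apply functional_extensionality. intros k. apply fle_antisym.
  - apply pop_le; intros; apply meet_r.
  - destruct HP as [_ [_ H3]]. rewrite <- (meet_top (y k)), <- H3, meet_comm.
    apply join_meet_le. intros c Hc. apply (pop_ge P (fun _ => y) k c); auto. Qed.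

Lemma bop_pos p q x y k : fle p q -> fmeet p (bop q x y k) = fmeet p (x k).
Proof. intros H. apply fle_antisym.
  - apply meet_j2_le.
    + apply meet_mono. apply fle_refl. apply meet_r.
    + eapply le_tr; [|apply fbot_min]. rewrite <- (neg_meet q).
      apply meet_mono; auto. apply meet_l.
  - apply meet_i. apply meet_l. eapply le_tr; [|apply j2_l].
    apply meet_mono; auto. apply fle_refl. Qed.

Lemma bop_neg p q x y k : fle p (fneg q) -> fmeet p (bop q x y k) = fmeet p (y k).
Proof. intros H. apply fle_antisym.
  - apply meet_j2_le.
    + eapply le_tr; [|apply fbot_min]. rewrite <- (neg_meet' q).
      apply meet_mono; auto. apply meet_l.
    + apply meet_mono. apply fle_refl. apply meet_r.
  - apply meet_i. apply meet_l. eapply le_tr; [|apply j2_r].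
    apply meet_mono; auto. apply fle_refl. Qed.

Lemma ext_split_f c (f g : T1 M -> L) : comp c ->
  (forall k, fmeet c (f k) = fmeet c (g k)) ->
  (forall k, fmeet (fneg c) (f k) = fmeet (fneg c) (g k)) -> f = g.
Proof. intros Hc H1 H2; apply functional_extensionality; intros k;
  apply (ext_split c); auto. Qed.

Lemma bop_idem c x : comp c -> bop c x x = x.
Proof. intros Hc; apply (ext_split_f c); auto; intros k.
  apply bop_pos, fle_refl. apply bop_neg, fle_refl. Qed.

Lemma bop_bop_l c x y z : comp c -> bop c (bop c x y) z = bop c x z.
Proof. intros Hc; apply (ext_split_f c); auto; intros k.
  rewrite !bop_pos; auto using fle_refl. rewrite !bop_neg; auto using fle_refl. Qed.
Lemma bop_bop_r c x y z : comp c -> bop c x (bop c y z) = bop c x z.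
Proof. intros Hc; apply (ext_split_f c); auto; intros k.
  rewrite !bop_pos; auto using fle_refl. rewrite !bop_neg; auto using fle_refl. Qed.

Lemma bop_nest c d x y : comp c -> comp d -> bop d (bop c x y) y = bop (fmeet d c) x y.
Proof. intros Hc Hd; apply (ext_split_f d); auto; intros k.
  - rewrite bop_pos by apply fle_refl.
    apply (ext_split c); auto; rewrite !meet_assoc.
    + rewrite (bop_pos (fmeet c d) c) by apply meet_l.
      rewrite (bop_pos (fmeet c d) (fmeet d c)); auto. rewrite meet_comm; apply fle_refl.
    + rewrite (bop_neg (fmeet (fneg c) d) c) by apply meet_l.
      rewrite (bop_neg (fmeet (fneg c) d) (fmeet d c)); auto.
      apply neg_le. apply bot_eq. rewrite <- (neg_meet c). apply meet_mono.
      apply meet_r. apply meet_l.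
  - rewrite bop_neg by apply fle_refl. rewrite bop_neg; auto.
    apply neg_anti. apply meet_l. Qed.

Definition Pd d : L -> Prop := fun p => p <> fbot /\ (p = d \/ p = fneg d).

Lemma Pd_part d : comp d -> partition (Pd d).
Proof. intros Hd; split; [|split].
  - intros c [H _]; auto.
  - intros p q [_ [->| ->]] [_ [->| ->]] Hn; try congruence.
    apply neg_meet. apply neg_meet'.
  - apply top_eq. rewrite <- Hd. apply j2_lub.
    + destruct (classic (d = fbot)) as [->|Hn]. apply fbot_min. apply ub. split; auto.
    + destruct (classic (fneg d = fbot)) as [->|Hn]. apply fbot_min. apply ub. split; auto.
Qed.

Definition Xd d (u v : T1 M -> L) : L -> T1 M -> L :=
  fun p => if excluded_middle_informative (p = d) then u else v.

Lemma bop_as_pop d u v : comp d -> bop d u v = Pop (Pd d) (Xd d u v).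
Proof. intros Hd. apply (ext_split_f d); auto; intros k.
  - rewrite bop_pos by apply fle_refl.
    destruct (classic (d = fbot)) as [->|Hn]. rewrite !(meet_comm fbot). rewrite !meet_bot; auto.
    rewrite (pop_at _ _ _ d); auto using Pd_part, fle_refl. unfold Xd.
    destruct (excluded_middle_informative (d = d)); congruence. split; auto.
  - rewrite bop_neg by apply fle_refl.
    destruct (classic (fneg d = fbot)) as [He|Hn]. rewrite He, !(meet_comm fbot), !meet_bot; auto.
    rewrite (pop_at _ _ _ (fneg d)); auto using Pd_part, fle_refl. unfold Xd.
    destruct (excluded_middle_informative (fneg d = d)) as [He|]; auto.
    exfalso. apply Hn. rewrite <- (neg_meet d). rewrite He at 2. rewrite meet_idem; auto.
    split; auto. Qed.

End Free.


Section Cong.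
Context {M : Monad} {L : Frame}.
Implicit Types a b c d p q : L.
Implicit Types x y z u v : T1 M -> L.
Implicit Types m n k : T1 M.
Implicit Types X Y : L -> T1 M -> L.
Variable R : (T1 M -> L) -> (T1 M -> L) -> Prop.
Hypothesis HR : is_congruence R.

Lemma R_free x y : R x y -> free_elem x /\ free_elem y.
Proof. apply HR. Qed.
Lemma R_refl x : free_elem x -> R x x.
Proof. apply HR. Qed.
Lemma R_sym x y : R x y -> R y x.
Proof. apply HR. Qed.
Lemma R_trans x y z : R x y -> R y z -> R x z.
Proof. apply HR. Qed.
Lemma R_pop P X Y : partition P -> (forall c, P c -> R (X c) (Y c)) -> R (Pop P X) (Pop P Y).
Proof. apply HR. Qed.

Lemma R_bop d u u' v v' : comp d -> R u v -> R u' v' -> R (bop d u u') (bop d v v').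
Proof. intros Hd H1 H2. rewrite !bop_as_pop by auto. apply R_pop. apply Pd_part; auto.
  intros c _. unfold Xd. destruct (excluded_middle_informative (c = d)); auto. Qed.

Definition E c x y := R (bop c x y) y.

Lemma E_down c d x y : comp c -> comp d -> fle d c -> E c x y -> E d x y.
Proof. intros Hc Hd Hle H. unfold E in *.
  assert (Hy : free_elem y) by (apply (R_free _ _ H)).
  pose proof (R_bop _ _ _ _ _ Hd H (R_refl _ Hy)) as H2.
  rewrite bop_nest, meet_eq, bop_idem in H2; auto. Qed.

Lemma E_trans c x y z : comp c -> E c x y -> E c y z -> E c x z.
Proof. intros Hc H1 H2. unfold E in *.
  assert (Hz : free_elem z) by (apply (R_free _ _ H2)).
  pose proof (R_bop _ _ _ _ _ Hc H1 (R_refl _ Hz)) as H3. rewrite bop_bop_l in H3 by auto.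
  eapply R_trans; eauto. Qed.

Lemma E_glue c x y (P : L -> Prop) : comp c -> free_elem x -> free_elem y ->
  (forall p q, P p -> P q -> p <> q -> fmeet p q = fbot) -> fjoin P = c ->
  (forall p, P p -> E p x y) -> E c x y.
Proof. intros Hc Hx Hy Hdis Hj HE.
  set (P' := fun q => q <> fbot /\ (P q \/ q = fneg c)).
  set (X' := fun q => if excluded_middle_informative (q = fneg c) then y else bop q x y).
  assert (Hle : forall p, P p -> fle p c) by (intros; rewrite <- Hj; apply ub; auto).
  assert (Hdc : forall p, P p -> fmeet p (fneg c) = fbot).
  { intros p Hp. apply bot_eq. rewrite <- (neg_meet c). apply meet_mono; auto. apply fle_refl. }
  assert (HP' : partition P').
  { split; [|split].
    - intros q [H _]; auto.
    - intros p q [_ [Hp| ->]] [_ [Hq| ->]] Hn; auto.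
      + rewrite meet_comm; auto.
      + congruence.
    - apply top_eq. rewrite <- Hc. apply j2_lub.
      + rewrite <- Hj at 1. apply lub. intros p Hp.
        destruct (classic (p = fbot)) as [->|Hn]. apply fbot_min. apply ub. split; auto.
      + destruct (classic (fneg c = fbot)) as [->|Hn]. apply fbot_min. apply ub. split; auto. }
  assert (HR1 : R (Pop P' X') (Pop P' (fun _ => y))).
  { apply R_pop; auto. intros q [_ Hq]. unfold X'.
    destruct (excluded_middle_informative (q = fneg c)). apply R_refl; auto.
    destruct Hq as [Hq|Hq]; [apply HE; auto|congruence]. }
  rewrite pop_const in HR1 by auto.
  unfold E. replace (bop c x y) with (Pop P' X'); [exact HR1|].
  apply (ext_split_f c); auto; intros k.
  - rewrite bop_pos by apply fle_refl. apply fle_antisym.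
    + unfold Pop. apply meet_join_le. intros v [q [[_ Hq] ->]].
      unfold X'. destruct (excluded_middle_informative (q = fneg c)) as [->|Hn].
      * eapply le_tr; [|apply fbot_min]. rewrite <- (neg_meet c). apply meet_mono.
        apply fle_refl. apply meet_l.
      * destruct Hq as [Hq|Hq]; [|congruence]. rewrite bop_pos by apply fle_refl.
        apply meet_mono. apply fle_refl. apply meet_r.
    + assert (H : fle (fmeet (fjoin P) (x k)) (fmeet c (Pop P' X' k))).
      { apply join_meet_le. intros p Hp. apply meet_i. eapply le_tr; [apply meet_l|auto].
        destruct (classic (p = fbot)) as [->|Hn]. eapply le_tr; [apply meet_l|apply fbot_min].
        assert (Hn2 : p <> fneg c).
        { intros He. apply Hn. rewrite <- (Hdc p Hp). rewrite <- He, meet_idem; auto. }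
        eapply le_tr; [|apply (pop_ge P' X' k p)]. unfold X'.
        destruct (excluded_middle_informative (p = fneg c)); [congruence|].
        rewrite bop_pos by apply fle_refl. apply fle_refl. split; auto. }
      rewrite Hj in H. auto.
  - rewrite bop_neg by apply fle_refl. apply fle_antisym.
    + unfold Pop. apply meet_join_le. intros v [q [[_ Hq] ->]].
      unfold X'. destruct (excluded_middle_informative (q = fneg c)) as [->|Hn].
      * apply meet_mono. apply fle_refl. apply meet_r.
      * destruct Hq as [Hq|Hq]; [|congruence].
        eapply le_tr; [|apply fbot_min]. rewrite <- (Hdc q Hq). rewrite meet_comm.
        apply meet_mono. apply meet_l. apply fle_refl.
    + destruct (classic (fneg c = fbot)) as [He|Hn].
      rewrite He. eapply le_tr; [apply meet_l|apply fbot_min].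
      apply meet_i. apply meet_l. eapply le_tr; [|apply (pop_ge P' X' k (fneg c))].
      unfold X'. destruct (excluded_middle_informative (fneg c = fneg c)); [|congruence].
      apply fle_refl. split; auto.
Qed.

End Cong.


Section LB.
Context {M : Monad} {L : Frame}.
Variable gen : MT M bool -> L.
Hypothesis Hrel : LB0_relations gen.
Implicit Types m n k : T1 M.

Notation "[ t |-> a ]" := (gen (mapsto t a)).

Lemma rel1 A (t : MT M A) (a a' : A) : a <> a' -> fmeet [t |-> a] [t |-> a'] = fbot.
Proof. apply Hrel. Qed.
Lemma rel2 A (t : MT M A) (a : A) : [mthen t (mret a) |-> a] = ftop.
Proof. apply Hrel. Qed.
Lemma rel3 A B (t : MT M A) (u : A -> MT M B) (b : B) :
  [mbind t u |-> b] = fjoin (fun v => exists a, v = fmeet [t |-> a] [mthen t (u a) |-> b]).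
Proof. apply Hrel. Qed.

Lemma cover A (t : MT M A) : fjoin (fun v => exists a, v = [t |-> a]) = ftop.
Proof. apply top_eq.
  assert (H : [mbind t (fun _ => mret tt) |-> tt] = ftop).
  { set (t2 := mbind t (fun _ => mret tt)).
    replace t2 with (mthen t2 (mret tt)). apply rel2.
    unfold t2, mthen. rewrite mbind_assoc. f_equal. apply functional_extensionality.
    intros; rewrite mbind_ret_l; auto. }
  rewrite <- H, rel3. apply lub. intros v [a ->]. apply ub_le with [t |-> a]. eauto. apply meet_l.
Qed.

Lemma mapsto_comp A (t : MT M A) (a : A) : comp [t |-> a].
Proof. apply (comp_of_disj _ (fun a => [t |-> a])). intros; apply rel1; auto. apply cover. Qed.

Lemma mapsto_true (b : MT M bool) : mapsto b true = b.
Proof. unfold mapsto. rewrite <- (mbind_ret_r b) at 2. f_equal. apply functional_extensionality.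
  intros a; unfold delta_bool. destruct (excluded_middle_informative (a = true)); destruct a; congruence. Qed.

Lemma gen_comp b : comp (gen b).
Proof. rewrite <- (mapsto_true b). apply mapsto_comp. Qed.

Lemma local A B (t : MT M A) (u : A -> MT M B) (a : A) (b : B) :
  fle (fmeet [t |-> a] [mbind t u |-> b]) [mthen t (u a) |-> b].
Proof. rewrite rel3. apply meet_join_le. intros v [a' ->].
  destruct (classic (a = a')) as [<-|Hn]. eapply le_tr; apply meet_r.
  eapply le_tr; [|apply fbot_min]. rewrite <- (rel1 _ t _ _ Hn). apply meet_mono. apply fle_refl. apply meet_l. Qed.

Lemma Pt_part A (t : MT M A) : partition (Pt gen t).
Proof. split; [|split].
  - intros c [_ H]; auto.
  - intros c d [[a ->] _] [[a' ->] _] Hn. apply rel1. intros ->; auto.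
  - apply top_eq. rewrite <- (cover _ t). apply lub. intros v [a ->].
    destruct (classic ([t |-> a] = fbot)) as [He|Hn]. rewrite He; apply fbot_min.
    apply ub. split; eauto. Qed.

Lemma gen_family_eq A (t : MT M A) (u : A -> T1 M) (a : A) : [t |-> a] <> fbot ->
  gen_family gen t u [t |-> a] = dirac L (mthen t (u a)).
Proof. intros Hn. apply functional_extensionality; intros k. apply fle_antisym.
  - apply lub. intros v [a' [He ->]]. destruct (classic (a = a')) as [<-|Hn2]. apply fle_refl.
    exfalso. apply Hn. rewrite <- (rel1 _ t _ _ Hn2), <- He, meet_idem; auto.
  - apply ub. eauto. Qed.

Lemma gen_local A (t : MT M A) (u : A -> T1 M) (a : A) (c : L) k : fle c [t |-> a] ->
  fmeet c (Pop (Pt gen t) (gen_family gen t u) k) = fmeet c (dirac L (mthen t (u a)) k).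
Proof. intros Hc. destruct (classic ([t |-> a] = fbot)) as [He|Hn].
  - assert (c = fbot) as -> by (apply bot_eq; rewrite <- He; auto).
    rewrite !(meet_comm fbot), !meet_bot; auto.
  - rewrite (pop_at _ _ _ [t |-> a]); auto using Pt_part. rewrite gen_family_eq; auto.
    split; eauto. Qed.

Lemma gen_free A (t : MT M A) (u : A -> T1 M) : free_elem (Pop (Pt gen t) (gen_family gen t u)).
Proof. apply pop_free. apply Pt_part. intros c [[a ->] Hn]. rewrite gen_family_eq; auto.
  apply dirac_free. Qed.

Section Gen.
Variable R : (T1 M -> L) -> (T1 M -> L) -> Prop.
Hypothesis HR : is_congruence R.
Hypothesis HG : contains_generators gen R.

Lemma E_gen A (t : MT M A) (u u' : A -> T1 M) (a : A) (c : L) : comp c -> fle c [t |-> a] -> u a = u' a ->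
  E R c (dirac L (mbind t u)) (dirac L (mbind t u')).
Proof. intros Hc Hle Hu. pose proof (HG _ t u) as H1. pose proof (HG _ t u') as H2.
  pose proof (R_bop R HR _ _ _ _ _ Hc H1 H2) as H3.
  replace (bop c (Pop (Pt gen t) (gen_family gen t u)) (Pop (Pt gen t) (gen_family gen t u')))
    with (Pop (Pt gen t) (gen_family gen t u')) in H3.
  - unfold E. eapply (R_trans R HR); eauto. apply (R_sym R HR); auto.
  - symmetry. apply (ext_split_f c); auto; intros k.
    + rewrite bop_pos by apply fle_refl. rewrite (gen_local _ t u a c k Hle), (gen_local _ t u' a c k Hle), Hu; auto.
    + rewrite bop_neg by apply fle_refl. auto.
Qed.
End Gen.

End LB.


Section Sieves.
Context {L : Frame}.
Implicit Types a b c d e p q : L.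

Definition Closed (D : L -> Prop) : Prop :=
  (forall c, D c -> comp c) /\
  (forall c d, D c -> comp d -> fle d c -> D d) /\
  (forall c (P : L -> Prop), comp c ->
     (forall p q, P p -> P q -> p <> q -> fmeet p q = fbot) -> fjoin P = c ->
     (forall p, P p -> D p) -> D c).

Definition jcl (S : L -> Prop) : L -> Prop :=
  fun c => forall D, Closed D -> (forall s, S s -> comp s -> D s) -> D c.

Lemma comp_Closed : Closed comp.
Proof. split; [|split]; auto. Qed.

Lemma down_Closed e : Closed (fun c => comp c /\ fle c e).
Proof. split; [|split].
  - intros c [H _]; auto.
  - intros c d [_ H1] H2 H3; split; auto. eapply le_tr; eauto.
  - intros c P Hc _ Hj HP. split; auto. rewrite <- Hj. apply lub. intros p Hp; apply HP; auto. Qed.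

Lemma jcl_min S D : Closed D -> (forall s, S s -> comp s -> D s) -> forall c, jcl S c -> D c.
Proof. intros H1 H2 c Hc; apply Hc; auto. Qed.

Lemma jcl_incl S s : S s -> comp s -> jcl S s.
Proof. intros H1 H2 D HD HS; auto. Qed.

Lemma jcl_Closed S : Closed (jcl S).
Proof. split; [|split].
  - intros c Hc. apply (jcl_min S _ comp_Closed); auto.
  - intros c d Hc Hd Hle D HD HS. destruct HD as [H1 [H2 H3]]. apply (H2 c); auto. apply Hc; auto.
    split; auto.
  - intros c P Hc Hdis Hj HP D HD HS. pose proof HD as [H1 [H2 H3]]. apply (H3 c P); auto.
    intros p Hp; apply HP; auto. Qed.

Lemma jcl_mono S S' : (forall s, S s -> comp s -> S' s) -> forall c, jcl S c -> jcl S' c.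
Proof. intros H. apply jcl_min. apply jcl_Closed. intros; apply jcl_incl; auto. Qed.

Lemma jcl_comp S c : jcl S c -> comp c.
Proof. apply jcl_min; auto using comp_Closed. Qed.

Lemma jcl_le S c : jcl S c -> fle c (fjoin S).
Proof. intros H. apply (jcl_min S _ (down_Closed (fjoin S))); auto.
  intros s H1 H2; split; auto. apply ub; auto. Qed.

Lemma closed_bot D : Closed D -> D fbot.
Proof. intros [H1 [H2 H3]]. apply (H3 fbot (fun _ => False)); auto using comp_bot.
  intros p q []. apply fjoin_empty. intros p []. Qed.

Lemma closed_bot_eq c : jcl (fun _ => False) c -> c = fbot.
Proof. intros H. apply bot_eq. apply (jcl_min _ _ (down_Closed fbot)) in H. apply H.
  intros s []. Qed.

Lemma jcl_meet U B : Closed B -> (forall c d, U c -> comp d -> fle d c -> U d) ->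
  forall c, jcl U c -> B c -> jcl (fun e => U e /\ B e) c.
Proof. intros HB HU.
  set (D' := fun c => comp c /\ forall d, comp d -> fle d c -> B d -> jcl (fun e => U e /\ B e) d).
  assert (HD' : Closed D').
  { split; [|split].
    - intros c [H _]; auto.
    - intros c d [Hc H] Hd Hle. split; auto. intros e He Hle2 HBe. apply H; auto. eapply le_tr; eauto.
    - intros c P Hc Hdis Hj HP. split; auto. intros d Hd Hle HBd.
      pose proof (jcl_Closed (fun e => U e /\ B e)) as [_ [_ H3]].
      apply (H3 d (fun v => exists s, P s /\ v = fmeet d s)); auto.
      + intros p q [s [Hs ->]] [s' [Hs' ->]] Hn. assert (s <> s') by (intros ->; auto).
        apply bot_eq. rewrite <- (Hdis s s'); auto. apply meet_mono; apply meet_r.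
      + rewrite <- fdistr, Hj. apply meet_eq; auto.
      + intros p [s [Hs ->]]. destruct (HP s Hs) as [Hcs Hs2]. apply Hs2.
        apply comp_meet; auto. apply meet_r.
        destruct HB as [_ [HB2 _]]. apply (HB2 d); auto. apply comp_meet; auto. apply meet_l. }
  intros c Hc HBc. assert (H : D' c).
  { apply (jcl_min U _ HD'); auto. intros s Hs Hcs. split; auto. intros d Hd Hle HBd.
    apply jcl_incl; auto. split; auto. apply (HU s); auto. }
  destruct H as [Hcc H]. apply H; auto using fle_refl. Qed.

Definition CS := { D : L -> Prop | Closed D }.

Lemma CS_ext (D E : CS) : (forall c, proj1_sig D c <-> proj1_sig E c) -> D = E.
Proof. destruct D as [D HD], E as [E HE]; simpl; intros H.
  assert (D = E) as ->. { apply functional_extensionality; intros c; apply propositional_extensionality; auto. }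
  f_equal; apply proof_irrelevance. Qed.

Definition Fle (D E : CS) : Prop := forall c, proj1_sig D c -> proj1_sig E c.

Lemma meet_Closed D E : Closed D -> Closed E -> Closed (fun c => D c /\ E c).
Proof. intros [D1 [D2 D3]] [E1 [E2 E3]]. split; [|split].
  - intros c [H _]; auto.
  - intros c d [H1 H2] Hd Hle; split; eauto.
  - intros c P Hc Hdis Hj HP. split; [apply (D3 c P)|apply (E3 c P)]; auto; intros p Hp; apply HP; auto. Qed.

Definition Fmeet (D E : CS) : CS :=
  exist _ (fun c => proj1_sig D c /\ proj1_sig E c) (meet_Closed _ _ (proj2_sig D) (proj2_sig E)).
Definition Fjoin (SS : CS -> Prop) : CS :=
  exist _ (jcl (fun c => exists D, SS D /\ proj1_sig D c)) (jcl_Closed _).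
Definition Ftop : CS := exist _ comp comp_Closed.
Definition Fbot : CS := exist _ (jcl (fun _ => False)) (jcl_Closed _).

Lemma F_refl D : Fle D D. Proof. intros c; auto. Qed.
Lemma F_trans D E G : Fle D E -> Fle E G -> Fle D G. Proof. intros H1 H2 c H; auto. Qed.
Lemma F_antisym D E : Fle D E -> Fle E D -> D = E.
Proof. intros; apply CS_ext; split; auto. Qed.
Lemma F_meet_glb D E G : Fle G (Fmeet D E) <-> Fle G D /\ Fle G E.
Proof. split. intros H; split; intros c Hc; apply H; auto.
  intros [H1 H2] c Hc; split; auto. Qed.
Lemma F_join_ub (SS : CS -> Prop) D : SS D -> Fle D (Fjoin SS).
Proof. intros H c Hc. apply jcl_incl. eauto. apply (proj1 (proj2_sig D)); auto. Qed.
Lemma F_join_lub (SS : CS -> Prop) G : (forall D, SS D -> Fle D G) -> Fle (Fjoin SS) G.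
Proof. intros H c Hc. apply (jcl_min _ _ (proj2_sig G)) in Hc; auto.
  intros s [D [HD Hs]] _. apply (H D); auto. Qed.
Lemma F_top_max D : Fle D Ftop.
Proof. intros c Hc. apply (proj1 (proj2_sig D)); auto. Qed.
Lemma F_bot_min D : Fle Fbot D.
Proof. intros c Hc. apply (jcl_min _ _ (proj2_sig D)) in Hc; auto. intros s []. Qed.
Lemma F_distr D (SS : CS -> Prop) :
  Fmeet D (Fjoin SS) = Fjoin (fun V => exists S, SS S /\ V = Fmeet D S).
Proof. apply CS_ext. intros c; simpl; split.
  - intros [HD HJ].
    assert (HU : forall c' d', (exists D0, SS D0 /\ proj1_sig D0 c') -> comp d' -> fle d' c' ->
                 exists D0, SS D0 /\ proj1_sig D0 d').
    { intros c' d' [S [HS Hs]] Hd Hle. exists S; split; auto.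
      apply (proj1 (proj2 (proj2_sig S)) c'); auto. }
    pose proof (jcl_meet _ _ (proj2_sig D) HU c HJ HD) as H.
    revert H. apply jcl_mono.
    intros s [[S [HS Hs]] HDs] _. exists (Fmeet D S). split; eauto. simpl; auto.
  - intros H. split.
    + apply (jcl_min _ _ (proj2_sig D)) in H; auto. intros s [V [[S [HS ->]] Hs]] _. destruct Hs; auto.
    + eapply jcl_mono; [|apply H]. intros s [V [[S [HS ->]] Hs]] _. exists S; split; auto.
      destruct Hs; auto. Qed.

Definition SFrame : Frame :=
  {| fc := CS; fle := Fle; fmeet := Fmeet; fjoin := Fjoin; ftop := Ftop; fbot := Fbot;
     fle_refl := F_refl; fle_trans := F_trans; fle_antisym := F_antisym;
     fmeet_glb := F_meet_glb; fjoin_ub := F_join_ub; fjoin_lub := F_join_lub;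
     ftop_max := F_top_max; fbot_min := F_bot_min; fdistr := F_distr |}.

End Sieves.


Lemma id_hom (L : Frame) : frame_hom (fun x : L => x).
Proof. split; [|split]; auto. intros S. apply fle_antisym; apply lub.
  intros a Ha; apply ub; eauto. intros v [s [Hs ->]]; apply ub; auto. Qed.

Lemma comp_hom (L1 L2 L3 : Frame) (f : L1 -> L2) (g : L2 -> L3) :
  frame_hom f -> frame_hom g -> frame_hom (fun x => g (f x)).
Proof. intros [f1 [f2 f3]] [g1 [g2 g3]]. split; [|split].
  - intros; rewrite f1, g1; auto.
  - rewrite f2, g2; auto.
  - intros S. rewrite f3, g3. f_equal. apply functional_extensionality; intros v.
    apply propositional_extensionality; split.
    + intros [w [[s [Hs ->]] ->]]; eauto.
    + intros [s [Hs ->]]; eauto. Qed.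

Lemma hom_mono (L1 L2 : Frame) (f : L1 -> L2) a b : frame_hom f -> fle a b -> fle (f a) (f b).
Proof. intros [f1 _] H. rewrite <- (meet_eq _ _ H), f1. apply meet_r. Qed.

Lemma hom_bot (L1 L2 : Frame) (f : L1 -> L2) : frame_hom f -> f fbot = fbot.
Proof. intros [_ [_ f3]]. rewrite <- fjoin_empty, f3. apply bot_eq, lub. intros v [s [[] _]]. Qed.

Section Hom.
Context {M : Monad} {L : Frame}.
Variable gen : MT M bool -> L.
Hypothesis Hlb : is_LB0 gen.

Let Hrel : LB0_relations gen := proj1 Hlb.

Lemma jcl_down (e c : L) : jcl (fun c => fle c e) c -> fle c e.
Proof. intros H. apply (jcl_min _ _ (down_Closed e)) in H. apply H. intros s H1 H2; split; auto. Qed.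

Definition gS (b : MT M bool) : @SFrame L := exist _ (jcl (fun c => fle c (gen b))) (jcl_Closed _).

Lemma gS_rel : LB0_relations gS.
Proof. split; [|split].
  - intros A t a a' Hn. apply CS_ext. intros c; simpl. split.
    + intros [H1 H2]. apply jcl_down in H1. apply jcl_down in H2.
      assert (c = fbot) as ->. { apply bot_eq. rewrite <- (rel1 gen Hrel _ t _ _ Hn). apply meet_i; auto. }
      apply closed_bot, jcl_Closed.
    + intros H. apply closed_bot_eq in H. subst. split; apply closed_bot, jcl_Closed.
  - intros A t a. apply CS_ext. intros c; simpl. rewrite (rel2 gen Hrel). split.
    + apply jcl_comp.
    + intros Hc; apply jcl_incl; auto. apply ftop_max.
  - intros A B t u b. apply CS_ext. intros c; simpl. split.
    + intros H. revert c H. apply jcl_min. apply jcl_Closed.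
      intros c Hc Hcc.
      pose proof (jcl_Closed (fun c0 => exists D : CS, (exists a, D = Fmeet (gS (mapsto t a))
                    (gS (mapsto (mthen t (u a)) b))) /\ proj1_sig D c0)) as [_ [_ H3]].
      apply (H3 c (fun q => exists a, q = fmeet c (gen (mapsto t a)))); auto.
      * intros p q [a ->] [a' ->] Hn. assert (a <> a') by (intros ->; auto).
        apply bot_eq. rewrite <- (rel1 gen Hrel _ t _ _ H). apply meet_mono; apply meet_r.
      * transitivity (fmeet c (fjoin (fun v => exists a, v = gen (mapsto t a)))).
        rewrite fdistr. f_equal. apply functional_extensionality; intros v.
        apply propositional_extensionality; split.
        intros [a ->]; eauto. intros [s [[a ->] ->]]; eauto.
        rewrite (cover gen Hrel); apply meet_top.
      * intros p [a ->]. apply jcl_incl; [|apply comp_meet; auto using mapsto_comp].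
        exists (Fmeet (gS (mapsto t a)) (gS (mapsto (mthen t (u a)) b))). split; eauto.
        simpl. split; apply jcl_incl; auto using comp_meet, mapsto_comp.
        apply meet_r.
        eapply le_tr; [|apply (local gen Hrel _ _ t u a b)]. apply meet_i. apply meet_r.
        eapply le_tr; [apply meet_l|auto].
    + intros H. revert c H. apply jcl_min. apply jcl_Closed.
      intros s [D [[a ->] [H1 H2]]] Hs. apply jcl_incl; auto.
      apply jcl_down in H1. apply jcl_down in H2. rewrite (rel3 gen Hrel). apply ub_le with
        (fmeet (gen (mapsto t a)) (gen (mapsto (mthen t (u a)) b))). eauto. apply meet_i; auto.
Qed.

Definition phi (D : @SFrame L) : L := fjoin (proj1_sig D).

Lemma phi_hom : frame_hom phi.
Proof. split; [|split].
  - intros D E. apply fle_antisym.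
    + apply lub. intros c [H1 H2]. apply meet_i; apply ub; auto.
    + apply join_meet_le. intros d Hd. apply meet_join_le. intros e He. apply ub. simpl.
      pose proof (proj2_sig D) as [D1 [D2 _]]. pose proof (proj2_sig E) as [E1 [E2 _]].
      split; [apply (D2 d)|apply (E2 e)]; auto using comp_meet, meet_l, meet_r.
  - apply top_eq. apply ub. apply comp_top.
  - intros SS. apply fle_antisym.
    + eapply le_tr. apply lub. intros c Hc. apply (jcl_le _ _ Hc).
      apply lub. intros c [D [HD Hc]]. apply ub_le with (phi D). eauto. apply ub; auto.
    + apply lub. intros v [D [HD ->]]. apply lub. intros c Hc. apply ub. simpl.
      apply jcl_incl. eauto. apply (proj1 (proj2_sig D)); auto.
Qed.

Section WithH.
Variable h : L -> @SFrame L.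
Hypothesis Hh : frame_hom h.
Hypothesis Hg : forall b, h (gen b) = gS b.

Lemma phi_h x : phi (h x) = x.
Proof. destruct (proj2 Hlb L gen Hrel) as [h0 [_ Hu]].
  rewrite (Hu (fun x => phi (h x))), <- (Hu (fun x => x)); auto using id_hom.
  apply comp_hom; auto using phi_hom.
  intros b. rewrite Hg. apply fle_antisym. apply lub. intros c Hc. apply jcl_down; auto.
  apply ub. apply jcl_incl. apply fle_refl. apply (gen_comp gen Hrel). Qed.

Lemma h_below x c : proj1_sig (h x) c -> fle c x.
Proof. intros H. rewrite <- (phi_h x). apply ub; auto. Qed.

Lemma h_mono x y c : fle x y -> proj1_sig (h x) c -> proj1_sig (h y) c.
Proof. intros Hle. apply (hom_mono _ _ h _ _ Hh Hle). Qed.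

Lemma h_self c : comp c -> proj1_sig (h c) c.
Proof. intros Hc. destruct Hh as [h1 [h2 h3]].
  assert (H : proj1_sig (h (fjoin2 c (fneg c))) c) by (rewrite Hc, h2; simpl; auto).
  unfold fjoin2 in H. rewrite h3 in H. simpl in H.
  assert (HU : forall c' d', (exists D : CS, (exists s, (s = c \/ s = fneg c) /\ D = h s) /\ proj1_sig D c')
     -> comp d' -> fle d' c' -> exists D : CS, (exists s, (s = c \/ s = fneg c) /\ D = h s) /\ proj1_sig D d').
  { intros c' d' [D [HD Hc']] Hd Hle. exists D; split; auto.
    apply (proj1 (proj2 (proj2_sig D)) c'); auto. }
  assert (Hcc : comp c /\ fle c c) by (split; auto using fle_refl).
  pose proof (jcl_meet _ _ (down_Closed c) HU c H Hcc) as H2.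
  revert H2. apply jcl_min. apply (proj2_sig (h c)).
  intros s [[D [[s' [[-> | ->] ->]] HD]] [_ Hsc]] Hs; auto.
  assert (s = fbot) as ->. { apply bot_eq. rewrite <- (neg_meet c). apply meet_i; auto.
    apply (h_below _ _ HD). }
  apply closed_bot, (proj2_sig (h c)).
Qed.

End WithH.
End Hom.


Lemma bigmeet_hom (L1 L2 : Frame) (H : L1 -> L2) (f : nat -> L1) j :
  frame_hom H -> H (bigmeet f j) = bigmeet (fun i => H (f i)) j.
Proof. intros [h1 [h2 _]]. induction j; simpl; auto. rewrite h1, IHj; auto. Qed.

Lemma bigmeet_ext (L : Frame) (f g : nat -> L) j :
  (forall i, i < j -> f i = g i) -> bigmeet f j = bigmeet g j.
Proof. induction j; simpl; intros H; auto. rewrite IHj, H; auto. Qed.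

Lemma bigmeet_S (L : Frame) (f : nat -> L) j : bigmeet f (S j) = fmeet (bigmeet f j) (f j).
Proof. reflexivity. Qed.

Section Traces.
Context {M : Monad} {L : Frame}.
Variable K : Type.
Variable gen : MT M bool -> L.
Implicit Types m n k : T1 M.

Lemma trace_least (Fr : Frame) (H : L -> Fr) (G : T1 M -> T1 M -> Fr) :
  frame_hom H ->
  (forall m n, fle (H (trace1 K gen m n)) (G m n)) ->
  (forall m k n, fle (fmeet (G m k) (G k n)) (G m n)) ->
  forall m n, fle (H (trace K gen m n)) (G m n).
Proof. intros Hh H1 H2.
  assert (aux : forall (s : nat -> T1 M) j,
    fle (bigmeet (fun i => H (trace1 K gen (s (i + 1)) (s (i + 2)))) (S j)) (G (s 1) (s (S (S j))))).
  { intros s j. induction j.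
    - simpl. eapply le_tr; [apply meet_r|]. apply H1.
    - change (bigmeet (fun i => H (trace1 K gen (s (i + 1)) (s (i + 2)))) (S (S j))) with
        (fmeet (bigmeet (fun i => H (trace1 K gen (s (i + 1)) (s (i + 2)))) (S j))
               (H (trace1 K gen (s (S j + 1)) (s (S j + 2))))).
      replace (S j + 1) with (S (S j)) by lia. replace (S j + 2) with (S (S (S j))) by lia.
      eapply le_tr; [|apply (H2 _ (s (S (S j))))]. apply meet_mono; auto. }
  intros m n. unfold trace. destruct Hh as [h1 [h2 h3]]. rewrite h3. apply lub.
  intros v [w [[k [Hk ->]] ->]]. destruct k as [|[|k]]; [lia| |].
  - simpl. apply H1.
  - change (tracek K gen (S (S k)) m n) with (fjoin (fun v => exists s : nat -> T1 M, s 1 = m /\ s (S (S k)) = n /\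
       v = bigmeet (fun i => trace1 K gen (s (i + 1)) (s (i + 2))) (S (S k) - 1))).
    rewrite h3. apply lub. intros v [w [[s [Hs1 [Hs2 ->]]] ->]].
    rewrite (bigmeet_hom _ _ H); [|split; auto]. rewrite <- Hs1, <- Hs2.
    replace (S (S k) - 1) with (S k) by lia. apply aux.
Qed.

Lemma trace1_sym m n : fle (trace1 K gen m n) (trace1 K gen n m).
Proof. apply lub. intros v [A [t [u [u' [a [HA [Hu [Hm [Hn ->]]]]]]]]].
  apply ub. exists A, t, u', u, a. repeat split; auto. Qed.

Lemma trace1_le m n : fle (trace1 K gen m n) (trace K gen m n).
Proof. apply ub_le with (tracek K gen 1 m n). exists 1; split; auto. apply fle_refl. Qed.

Lemma trace1_le2 m n : fle (trace1 K gen m n) (tracek K gen 2 m n).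
Proof. simpl. apply ub_le with (bigmeet (fun i => trace1 K gen ((fun j => if Nat.eqb j 1 then m else n) (i + 1))
  ((fun j => if Nat.eqb j 1 then m else n) (i + 2))) 1).
  exists (fun j => if Nat.eqb j 1 then m else n). repeat split; auto.
  simpl. apply meet_i; auto using ftop_max, fle_refl. Qed.

Lemma trace_ext1 m k n : fle (fmeet (trace K gen m k) (trace1 K gen k n)) (trace K gen m n).
Proof. unfold trace at 1. apply join_meet_le. intros v [j [Hj ->]].
  assert (Hj2 : exists j', 2 <= j' /\ fle (tracek K gen j m k) (tracek K gen j' m k)).
  { destruct j as [|[|j]]; [lia| |]. exists 2; split; auto. apply trace1_le2.
    exists (S (S j)); split; [lia|apply fle_refl]. }
  destruct Hj2 as [j' [Hj' Hle]]. eapply le_tr; [apply meet_mono; [apply Hle|apply fle_refl]|].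
  apply ub_le with (tracek K gen (S j') m n). exists (S j'); split; auto; lia.
  destruct j' as [|[|j']]; [lia|lia|].
  change (tracek K gen (S (S j')) m k) with
    (fjoin (fun v => exists s : nat -> T1 M, s 1 = m /\ s (S (S j')) = k /\
       v = bigmeet (fun i => trace1 K gen (s (i + 1)) (s (i + 2))) (S (S j') - 1))).
  change (tracek K gen (S (S (S j'))) m n) with
    (fjoin (fun v => exists s : nat -> T1 M, s 1 = m /\ s (S (S (S j'))) = n /\
       v = bigmeet (fun i => trace1 K gen (s (i + 1)) (s (i + 2))) (S (S (S j')) - 1))).
  apply join_meet_le. intros v [s [Hs1 [Hs2 ->]]].
  set (s' := fun i => if Nat.eqb i (S (S (S j'))) then n else s i).
  apply ub_le with (bigmeet (fun i => trace1 K gen (s' (i + 1)) (s' (i + 2))) (S (S (S j')) - 1)).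
  exists s'. repeat split; auto.
  unfold s'; simpl. auto.
  unfold s'; rewrite Nat.eqb_refl; auto.
  replace (S (S (S j')) - 1) with (S (S j')) by lia. replace (S (S j') - 1) with (S j') by lia.
  rewrite (bigmeet_S _ (fun i => trace1 K gen (s' (i + 1)) (s' (i + 2))) (S j')).
  apply meet_mono.
  - rewrite (bigmeet_ext _ (fun i => trace1 K gen (s' (i + 1)) (s' (i + 2)))
                           (fun i => trace1 K gen (s (i + 1)) (s (i + 2)))). apply fle_refl.
    intros i Hi. unfold s'. replace (Nat.eqb (i+1) (S (S (S j')))) with false.
    replace (Nat.eqb (i+2) (S (S (S j')))) with false. auto.
    symmetry; apply Nat.eqb_neq; lia. symmetry; apply Nat.eqb_neq; lia.
  - unfold s'. replace (S j' + 1) with (S (S j')) by lia. replace (S j' + 2) with (S (S (S j'))) by lia.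
    rewrite Nat.eqb_refl. replace (Nat.eqb (S (S j')) (S (S (S j')))) with false.
    rewrite Hs2. apply fle_refl. symmetry; apply Nat.eqb_neq; lia.
Qed.

Lemma trace_trans m k n : fle (fmeet (trace K gen m k) (trace K gen k n)) (trace K gen m n).
Proof. pose proof (trace_least L (fun x => x) (fun k n => imp (trace K gen m k) (trace K gen m n)) (id_hom L))
    as H.
  assert (H' : fle (trace K gen k n) (imp (trace K gen m k) (trace K gen m n))).
  { apply H.
    - intros k' n'. apply imp_intro. rewrite meet_comm. apply trace_ext1.
    - intros; apply imp_trans. }
  eapply le_tr; [|apply (imp_elim (trace K gen m k))]. rewrite meet_comm. apply meet_mono; auto using fle_refl.
Qed.

Lemma trace_sym m n : fle (trace K gen m n) (trace K gen n m).
Proof. apply (trace_least L (fun x => x) (fun m n => trace K gen n m) (id_hom L)).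
  - intros; eapply le_tr; [apply trace1_sym|apply trace1_le].
  - intros m' k n'. rewrite meet_comm. apply trace_trans. Qed.

Hypothesis Hrel : LB0_relations gen.
Hypothesis HK : card_le nat K.

Lemma trace_refl m : trace K gen m m = ftop.
Proof. apply top_eq. eapply le_tr; [|apply trace1_le].
  apply ub_le with (gen (mapsto (mret tt : MT M unit) tt)).
  - exists unit, (mret tt), (fun _ => m), (fun _ => m), tt. repeat split; auto.
    destruct HK as [f Hf]. exists (fun _ => f 0). intros [] [] _; auto.
    rewrite mbind_ret_l; auto. rewrite mbind_ret_l; auto.
  - pose proof (rel2 gen Hrel _ (mret tt : MT M unit) tt) as H2. unfold mthen in H2.
    rewrite mbind_ret_l in H2. rewrite H2. apply fle_refl. Qed.

End Traces.


Lemma eq_le (L : Frame) (a b : L) : a = b -> fle a b.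
Proof. intros ->; apply fle_refl. Qed.

Section Main.
Context {M : Monad} {L : Frame}.
Variable K : Type.
Variable gen : MT M bool -> L.
Hypothesis Hrank : ranked_of_rank M K.
Hypothesis Hlb : is_LB0 gen.
Let Hrel : LB0_relations gen := proj1 Hlb.
Let HK : card_le nat K := proj1 (proj1 Hrank).
Implicit Types m n k : T1 M.
Implicit Types x y z : T1 M -> L.

Lemma rel2' A B (t : MT M A) (b : B) : gen (mapsto (mthen t (mret b)) b) = ftop.
Proof. set (t3 := mthen t (mret b)). replace t3 with (mthen t3 (mret b)). apply (rel2 gen Hrel).
  unfold t3, mthen. rewrite mbind_assoc. f_equal. apply functional_extensionality.
  intros; rewrite mbind_ret_l; auto. Qed.

Lemma rank_le A (t : MT M A) (u : A -> T1 M) (a : A) :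
  fle (gen (mapsto t a)) (trace1 K gen (mbind t u) (mthen t (u a))).
Proof. destruct (proj2 Hrank A t) as [I [t' [f [HI ->]]]].
  rewrite (rel3 gen Hrel). apply lub. intros v [i ->].
  destruct (classic (f i = a)) as [Hf|Hf].
  - eapply le_tr; [apply meet_l|]. apply ub.
    exists I, t', (fun i => u (f i)), (fun _ => u a), i. repeat split; auto.
    + apply (proj1 HI).
    + rewrite Hf; auto.
    + rewrite mbind_assoc. f_equal. apply functional_extensionality; intros; rewrite mbind_ret_l; auto.
    + unfold mthen. rewrite mbind_assoc. f_equal. apply functional_extensionality; intros; rewrite mbind_ret_l; auto.
  - eapply le_tr; [|apply fbot_min]. eapply le_tr; [apply meet_r|].
    pose proof (rel1 gen Hrel _ (mthen t' (mret (f i))) a (f i) (fun e => Hf (eq_sym e))) as H1.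
    rewrite rel2', meet_top in H1. rewrite H1; apply fle_refl.
Qed.

Definition R0 x y := free_elem x /\ free_elem y /\
  forall m n, fle (fmeet (x m) (y n)) (trace K gen m n).

Lemma R0_cong : is_congruence R0.
Proof. split; [|split; [|split; [|split]]].
  - intros x y [H1 [H2 _]]; auto.
  - intros x Hx. split; [|split]; auto. intros m n.
    destruct (classic (m = n)) as [<-|Hn].
    + rewrite (trace_refl K gen Hrel HK). apply ftop_max.
    + destruct Hx as [_ [Hd _]]. rewrite Hd; auto. apply fbot_min.
  - intros x y [H1 [H2 H3]]. split; [|split]; auto. intros m n.
    rewrite meet_comm. eapply le_tr; [apply H3|apply trace_sym].
  - intros x y z [H1 [H2 H3]] [_ [H4 H5]]. split; [|split]; auto. intros m n.
    rewrite <- (meet_top (fmeet (x m) (z n))). destruct H2 as [_ [_ Hc]]. rewrite <- Hc.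
    apply meet_join_le. intros s [p ->].
    eapply le_tr; [|apply (trace_trans K gen m p n)]. apply meet_i.
    + eapply le_tr; [|apply (H3 m p)]. apply meet_mono. apply meet_l. apply fle_refl.
    + eapply le_tr; [|apply (H5 p n)]. apply meet_i. apply meet_r. eapply le_tr; [apply meet_l|apply meet_r].
  - intros P X Y HP HXY. split; [|split].
    + apply pop_free; auto. intros c Hc; apply (HXY c Hc).
    + apply pop_free; auto. intros c Hc; apply (HXY c Hc).
    + intros m n. unfold Pop at 1. apply join_meet_le. intros v [c [Hc ->]].
      unfold Pop. apply meet_join_le. intros v [d [Hd ->]].
      destruct (classic (c = d)) as [<-|Hn].
      * eapply le_tr; [|apply (proj2 (proj2 (HXY c Hc)) m n)]. apply meet_mono; apply meet_r.
      * eapply le_tr; [|apply fbot_min]. destruct HP as [_ [H2 _]]. rewrite <- (H2 c d); auto.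
        apply meet_mono; apply meet_l.
Qed.

Lemma R0_gen : contains_generators gen R0.
Proof. intros A t u. split; [|split]. apply dirac_free. apply gen_free; auto. intros m n.
  destruct (classic (mbind t u = m)) as [<-|Hn]; [|rewrite dirac_neq; auto;
    rewrite meet_comm, meet_bot; apply fbot_min].
  eapply le_tr; [apply meet_r|]. apply pop_le. intros c [[a ->] Hn].
  rewrite gen_family_eq; auto.
  destruct (classic (mthen t (u a) = n)) as [<-|Hn2].
  - rewrite dirac_eq, meet_top. eapply le_tr; [apply rank_le|apply trace1_le].
  - rewrite dirac_neq, meet_bot; auto. apply fbot_min.
Qed.

Lemma approx_R0 x y : approx gen x y -> R0 x y.
Proof. intros H; apply H; auto using R0_cong, R0_gen. Qed.

Section Core.
Variable R : (T1 M -> L) -> (T1 M -> L) -> Prop.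
Hypothesis HR : is_congruence R.
Hypothesis HG : contains_generators gen R.

Lemma D_Closed m n : Closed (fun c => comp c /\ E R c (dirac L m) (dirac L n)).
Proof. split; [|split].
  - intros c [H _]; auto.
  - intros c d [Hc H] Hd Hle. split; auto. apply (E_down R HR c d); auto.
  - intros c P Hc Hdis Hj HP. split; auto. apply (E_glue R HR c _ _ P); auto using dirac_free.
    intros p Hp; apply HP; auto. Qed.

Lemma core m n c : comp c -> fle c (trace K gen m n) -> E R c (dirac L m) (dirac L n).
Proof. intros Hc Hle.
  destruct (proj2 Hlb (@SFrame L) (gS gen) (gS_rel gen Hlb)) as [h [[Hh Hg] _]].
  set (D := fun m n => exist _ _ (D_Closed m n) : @SFrame L).
  assert (HT : fle (h (trace K gen m n)) (D m n)).
  { apply trace_least; auto.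
    - intros m' n'. pose proof Hh as [_ [_ h3]]. unfold trace1. rewrite h3.
      intros e He. simpl in He. revert e He. apply jcl_min. apply (proj2_sig (D m' n')).
      intros s [V [[w [[A [t [u [u' [a [HA [Hu [-> [-> ->]]]]]]]]] ->]] Hs]] Hcs.
      rewrite Hg in Hs. simpl in Hs. apply jcl_down in Hs. simpl. split; auto.
      apply (E_gen gen Hrel R HR HG A t u u' a s); auto.
    - intros m' k' n' e [[He1 He2] [_ He3]]. split; auto. eapply E_trans; eauto. }
  pose proof (h_self gen Hlb h Hh Hg c Hc) as H1.
  pose proof (h_mono h Hh _ _ c Hle H1) as H2.
  apply HT in H2. destruct H2; auto. Qed.

End Core.

Lemma part2 m n b : complemented b ->
  (approx gen (bop b (dirac L m) (dirac L n)) (dirac L n) <-> trace_eq_b K gen b m n).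
Proof. intros Hb. apply comp_iff in Hb. split.
  - intros H. apply approx_R0 in H. destruct H as [_ [_ H]]. specialize (H m n).
    unfold trace_eq_b. eapply le_tr; [|apply H]. rewrite (dirac_eq n). apply meet_i; [|apply ftop_max].
    unfold bop. rewrite dirac_eq, meet_top. apply j2_l.
  - intros H R HR HG. apply (core R HR HG m n b Hb H).
Qed.

Lemma part1 x y : free_elem x -> free_elem y ->
  (approx gen x y <-> forall m n, trace_eq_b K gen (fmeet (x m) (y n)) m n).
Proof. intros Hx Hy. split.
  - intros H. apply approx_R0 in H. apply H.
  - intros Hxy R HR HG.
    set (d0 := (mret tt : T1 M, mret tt : T1 M)).
    set (pk := fun c => epsilon (inhabits d0) (fun p => c = fmeet (x (fst p)) (y (snd p)))).
    set (P := fun c => c <> fbot /\ exists m n, c = fmeet (x m) (y n)).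
    assert (Hpk : forall c, P c -> c = fmeet (x (fst (pk c))) (y (snd (pk c)))).
    { intros c [_ [m [n Hc]]]. unfold pk.
      apply (epsilon_spec (inhabits d0) (fun p => c = fmeet (x (fst p)) (y (snd p)))).
      exists (m, n); auto. }
    assert (Hxd := proj1 (proj2 Hx)). assert (Hyd := proj1 (proj2 Hy)).
    assert (Hxc := proj2 (proj2 Hx)). assert (Hyc := proj2 (proj2 Hy)).
    assert (HP : partition P).
    { split; [|split].
      - intros c [H _]; auto.
      - intros c d [_ [m [n ->]]] [_ [m' [n' ->]]] Hn.
        destruct (classic (m = m')) as [<-|Hm].
        + destruct (classic (n = n')) as [<-|Hn2]; [congruence|].
          apply bot_eq. rewrite <- (Hyd n n'); auto. apply meet_mono; apply meet_r.
        + apply bot_eq. rewrite <- (Hxd m m'); auto. apply meet_mono; apply meet_l.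
      - apply top_eq. rewrite <- Hxc. apply lub. intros v [m ->].
        rewrite <- (meet_top (x m)), <- Hyc. apply meet_join_le. intros s [n ->].
        destruct (classic (fmeet (x m) (y n) = fbot)) as [He|Hn]. rewrite He; apply fbot_min.
        apply ub. split; eauto. }
    assert (HR1 : R (Pop P (fun c => bop c (dirac L (fst (pk c))) (dirac L (snd (pk c)))))
                    (Pop P (fun c => dirac L (snd (pk c))))).
    { apply R_pop; auto. intros c Hc. pose proof (Hpk c Hc) as He.
      pose proof (Hxy (fst (pk c)) (snd (pk c))) as Ht. rewrite <- He in Ht.
      assert (Hcc : comp (fmeet (x (fst (pk c))) (y (snd (pk c))))) by (apply comp_meet; apply free_comp; auto).
      rewrite <- He in Hcc. apply core; auto. }
    replace (Pop P (fun c => bop c (dirac L (fst (pk c))) (dirac L (snd (pk c))))) with x in HR1.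
    replace (Pop P (fun c => dirac L (snd (pk c)))) with y in HR1. exact HR1.
    + apply functional_extensionality; intros k. apply fle_antisym.
      * rewrite <- (meet_top (y k)), <- Hxc, meet_comm. apply join_meet_le. intros s [m ->].
        destruct (classic (fmeet (x m) (y k) = fbot)) as [He|Hn]. rewrite He; apply fbot_min.
        assert (HPc : P (fmeet (x m) (y k))) by (split; eauto).
        pose proof (Hpk _ HPc) as He.
        destruct (classic (snd (pk (fmeet (x m) (y k))) = k)) as [Hk|Hk].
        -- eapply le_tr; [|apply (pop_ge P _ k _ HPc)]. cbv beta. rewrite Hk, dirac_eq, meet_top. apply fle_refl.
        -- exfalso. apply Hn. apply bot_eq. rewrite <- (Hyd _ _ Hk).
           apply meet_i. eapply le_tr; [apply (eq_le _ _ _ He)|apply meet_r]. apply meet_r.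
      * apply pop_le. intros c Hc. pose proof (Hpk c Hc) as He.
        destruct (classic (snd (pk c) = k)) as [<-|Hk].
        -- rewrite dirac_eq, meet_top. eapply le_tr; [apply (eq_le _ _ _ He)|apply meet_r].
        -- rewrite dirac_neq, meet_bot; auto. apply fbot_min.
    + apply functional_extensionality; intros k. apply fle_antisym.
      * rewrite <- (meet_top (x k)), <- Hyc. apply meet_join_le. intros s [n ->].
        destruct (classic (fmeet (x k) (y n) = fbot)) as [He|Hn]. rewrite He; apply fbot_min.
        assert (HPc : P (fmeet (x k) (y n))) by (split; eauto).
        pose proof (Hpk _ HPc) as He.
        destruct (classic (fst (pk (fmeet (x k) (y n))) = k)) as [Hk|Hk].
        -- eapply le_tr; [|apply (pop_ge P _ k _ HPc)]. cbv beta. rewrite bop_pos by apply fle_refl.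
           rewrite Hk, dirac_eq, meet_top. apply fle_refl.
        -- exfalso. apply Hn. apply bot_eq. rewrite <- (Hxd _ _ Hk).
           apply meet_i. eapply le_tr; [apply (eq_le _ _ _ He)|apply meet_l]. apply meet_l.
      * apply pop_le. intros c Hc. pose proof (Hpk c Hc) as He. rewrite bop_pos by apply fle_refl.
        destruct (classic (fst (pk c) = k)) as [<-|Hk].
        -- rewrite dirac_eq, meet_top. eapply le_tr; [apply (eq_le _ _ _ He)|apply meet_l].
        -- rewrite dirac_neq, meet_bot; auto. apply fbot_min.
Qed.

End Main.

Theorem lemma3p10 (M : Monad) (K : Type) (L : Frame) (gen : MT M bool -> L) :
  ranked_of_rank M K ->
  is_LB0 gen ->
  (forall x y : T1 M -> L,
      free_elem x -> free_elem y ->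
      (approx gen x y <->
       forall m n : T1 M, trace_eq_b K gen (fmeet (x m) (y n)) m n)) /\
  (forall (m n : T1 M) (b : L),
      complemented b ->
      (approx gen (bop b (dirac L m) (dirac L n)) (dirac L n) <->
       trace_eq_b K gen b m n)).
Proof.
  intros Hrank Hlb. split.
  - intros x y Hx Hy. apply (part1 K gen Hrank Hlb x y Hx Hy).
  - intros m n b Hb. apply (part2 K gen Hrank Hlb m n b Hb).
Qed.
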